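(* Assume the setting in the context (in particular Assumption (A)). Let $\rho>0$, $z_0\in V_f(\rho)$ and $\epsilon>0$, run Algorithm $\mathcal{A}_*$ from $z_0$ with accuracy $\epsilon$, and let $$D:=\left\lceil5+\frac{1}{\ln15}\ln\left(1+\frac{f(z_0)-f^*}{\epsilon}\right)\right\rceil.$$ If $j_{out}\geq D$, then $m_{\ell+1}\leq\frac{1}{\sqrt{15}}m_{\ell+1+D}$ for all $\ell\in\{0,1,\dots,j_{out}-D\}$.
   Context: Let $f:\mathbb{R}^n\to(-\infty,\infty]$ be a proper closed convex function such that the problem $f^*=\min_{x\in\mathbb{R}^n}f(x)$ is solvable. Let $\Omega_f=\{x: f(x)=f^*\}$, fix a norm $\|\cdot\|$ on $\mathbb{R}^n$ with dual norm $\|y\|_*=\sup\{y^Tz:\|z\|\leq 1\}$, and for $x\in\mathbb{R}^n$ let $\bar x=\arg\min_{z\in\Omega_f}\|x-z\|$. For $\rho\geq0$ let $V_f(\rho)=\{x: f(x)-f^*\leq\rho\}$. Let $\mathcal{A}$ be an iterative algorithm: for $x_0\in\mathrm{dom} f$ and integer $k\geq1$, $\mathcal{A}(x_0,k)$ denotes its $k$-th iterate started from $x_0$ (and $\mathcal{A}(x_0,0)=x_0$). Assumption (A): (i) for every $\rho>0$ there is $\mu_\rho>0$ with $f(x_0)-f^*\geq\frac{\mu_\rho}{2}\|x_0-\bar x_0\|^2$ for all $x_0\in V_f(\rho)$; (ii) there exist $a_f>0$, $L_f>0$ and $g:\mathbb{R}^n\to\mathbb{R}^n$ with $g(x)=0\iff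 x\in\Omega_f$ such that for every $x_0\in\mathrm{dom} f$: $f(\mathcal{A}(x_0,1))\leq f(x_0)-\frac{1}{2L_f}\|g(x_0)\|_*^2$ and $f(\mathcal{A}(x_0,k))-f^*\leq\frac{a_f}{(k+1)^2}\|x_0-\bar x_0\|^2$ for all $k\geq1$; (iii) $\bar n_\rho:=\max\{\frac12,\sqrt{2a_f/\mu_\rho}\}$. Procedure $\mathcal{A}_d(r,n)$ (input $r\in\mathrm{dom} f$, $n\in\mathbb{R}$): set $x_0=r$, $k=0$. Repeat: $k\gets k+1$; set $x_k=\mathcal{A}(x_0,k)$ if $f(\mathcal{A}(x_0,k))\leq f(x_{k-1})$, and $x_k=x_{k-1}$ otherwise; $\ell=\lfloor k/2\rfloor$; until $k\geq n$ and $f(x_\ell)-f(x_k)\leq\frac13(f(x_0)-f(x_\ell))$. Output $z=x_k$, $m=k$. Algorithm $\mathcal{A}_*(z_0)$ (input $z_0\in\mathrm{dom} f$, $\epsilon>0$): set $m_0=1$, $m_{-1}=1$, $j=-1$. Repeat: $j\gets j+1$; $s_j=\sqrt{\frac{f(z_{j-1})-f(z_j)}{f(z_{j-2})-f(z_j)}}$ if $j\geq2$ and $s_j=0$ otherwise; $n_j=\max\{m_j,4s_jm_{j-1}\}$; $[z_{j+1},m_{j+1}]=\mathcal{A}_d(z_j,n_j)$; until $f(z_j)-f(z_{j+1})\leq\epsilon$. Output $z_{out}=z_{j+1}$, $j_{out}=j$. *)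

(* Defs.v *)
From HB Require Import structures.
From mathcomp Require Import all_boot all_order all_algebra.
From mathcomp Require Import all_classical all_reals all_analysis.
Import numFieldTopology.Exports numFieldNormedType.Exports.
Set Implicit Arguments. Unset Strict Implicit. Unset Printing Implicit Defensive.
Import Order.TTheory GRing.Theory Num.Theory.
Local Open Scope classical_set_scope.
Local Open Scope ring_scope.

Section Defs.
Variables (R : realType) (n : nat).
Local Notation vec := 'rV[R]_n.

Definition is_norm (N : vec -> R) : Prop :=
  (forall x, 0 <= N x) /\ (forall x, N x = 0 -> x = 0) /\
  (forall (a : R) x, N (a *: x) = `|a| * N x) /\
  (forall x y, N (x + y) <= N x + N y).

Definition dotv (y z : vec) : R := \sum_(i < n) y 0 i * z 0 i.

Definition dual_norm (N : vec -> R) (y : vec) : R :=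
  sup [set dotv y z | z in [set z | N z <= 1]].

Definition proper_fun (f : vec -> \bar R) : Prop :=
  (forall x, f x != -oo%E) /\ (exists x, f x < +oo)%E.

(* closed = lower semicontinuous = all sublevel sets closed *)
Definition closed_fun (f : vec -> \bar R) : Prop :=
  forall a : R, closed [set x | (f x <= a%:E)%E].

Definition convex_fun (f : vec -> \bar R) : Prop :=
  forall (x y : vec) (t : R), 0 < t < 1 ->
    (f (t *: x + (1 - t) *: y)%R <= t%:E * f x + (1 - t)%:E * f y)%E.

Definition domf (f : vec -> \bar R) : set vec := [set x | (f x < +oo)%E].

Definition Omega (f : vec -> \bar R) (fstar : R) : set vec :=
  [set x | f x = fstar%:E].

Definition nearest (N : vec -> R) (Om : set vec) (x xb : vec) : Prop :=
  Om xb /\ forall z, Om z -> N (x - xb) <= N (x - z).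

Definition Vf (f : vec -> \bar R) (fstar rho : R) : set vec :=
  [set x | (f x <= (fstar + rho)%:E)%E].

(* Assumption (A) (i) and (ii); item (iii) is merely a definition. *)
Definition assumptionA (N : vec -> R) (f : vec -> \bar R) (fstar : R)
    (A : vec -> nat -> vec) : Prop :=
  (forall rho : R, 0 < rho -> exists mu : R, 0 < mu /\
     forall x0 xb, Vf f fstar rho x0 -> nearest N (Omega f fstar) x0 xb ->
       (f x0 - fstar%:E >= (mu / 2 * N (x0 - xb) ^+ 2)%:E)%E) /\
  (exists (af Lf : R) (g : vec -> vec), 0 < af /\ 0 < Lf /\
     (forall x, g x = 0 <-> Omega f fstar x) /\
     forall x0, domf f x0 ->
       (f (A x0 1%N) <= f x0 - (1 / (2 * Lf) * dual_norm N (g x0) ^+ 2)%:E)%E /\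
       forall (k : nat) xb, (1 <= k)%N -> nearest N (Omega f fstar) x0 xb ->
         (f (A x0 k) - fstar%:E <= (af / (k.+1%:R) ^+ 2 * N (x0 - xb) ^+ 2)%:E)%E).

(* real value of f on its domain (all iterates lie in dom f) *)
Definition Fr (f : vec -> \bar R) (x : vec) : R := fine (f x).

Fixpoint Ad_seq (f : vec -> \bar R) (A : vec -> nat -> vec) (r : vec) (k : nat) : vec :=
  match k with
  | 0%N => r
  | k'.+1 => if (f (A r k'.+1) <= f (Ad_seq f A r k'))%E then A r k'.+1
             else Ad_seq f A r k'
  end.

Definition Ad_stop f A (r : vec) (nr : R) (k : nat) : Prop :=
  let x := Ad_seq f A r in
  let l := (k./2)%N in
  nr <= k%:R /\ Fr f (x l) - Fr f (x k) <= (Fr f (x 0%N) - Fr f (x l)) / 3.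

Definition Ad_out f A (r : vec) (nr : R) (z : vec) (m : nat) : Prop :=
  (1 <= m)%N /\ Ad_stop f A r nr m /\
  (forall k, (1 <= k < m)%N -> ~ Ad_stop f A r nr k) /\
  z = Ad_seq f A r m.

(* n_j of algorithm A_* given the sequences z_j and m_j (j >= 0; m_{-1} only
   appears multiplied by s_0 = 0) *)
Definition Astar_n f (z : nat -> vec) (m : nat -> nat) (j : nat) : R :=
  match j with
  | 0%N | 1%N => (m j)%:R
  | j'.+2 =>
    let s := Num.sqrt ((Fr f (z j'.+1) - Fr f (z j)) / (Fr f (z j') - Fr f (z j))) in
    Num.max (m j)%:R (4 * s * (m j'.+1)%:R)
  end.

Definition Astar_run f A (z0 : vec) (eps : R) (z : nat -> vec) (m : nat -> nat)
    (jout : nat) : Prop :=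
  z 0%N = z0 /\ m 0%N = 1%N /\
  (forall j, (j <= jout)%N -> Ad_out f A (z j) (Astar_n f z m j) (z j.+1) (m j.+1)) /\
  (forall j, (j < jout)%N -> eps < Fr f (z j) - Fr f (z j.+1)) /\
  Fr f (z jout) - Fr f (z jout.+1) <= eps.

End Defs.

(* Main.v *)
Require Import Defs.
From HB Require Import structures.
From mathcomp Require Import all_boot all_order all_algebra.
From mathcomp Require Import all_classical all_reals all_analysis.
From mathcomp Require Import ring lra zify.
Import Order.TTheory GRing.Theory Num.Theory.
Local Open Scope classical_set_scope.
Local Open Scope ring_scope.
Lemma eqW' (R : realType) (x y : R) : x = y -> x <= y.
Proof. by move=> ->. Qed.
Lemma step_ineq (R : realType) (b c u v : R) :
  0 < b -> 0 < c -> 0 < u -> u <= v -> v < 15 * u ->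
  16 * (c / (b + c)) * u <= v -> 15 * c * u ^+ 2 <= b * v ^+ 2.
Proof.
move=> hb hc hu huv hv h.
have hbc : 0 < b + c by lra.
have ex : c / (b + c) * (b + c) = c by rewrite mulfVK // gt_eqF.
set x := c / (b + c) in h ex.
have h' : 16 * c * u <= (b + c) * v by nra.
have c15 : c < 15 * b by nra.
case: (lerP (15 * c) b) => hcb.
  have uv : u ^+ 2 <= v ^+ 2 by rewrite ler_sqr // nnegrE; lra.
  have u0 : 0 <= u ^+ 2 by rewrite exprn_ge0 ?ltW.
  nra.
have q : 15 * (b + c) ^+ 2 <= 256 * b * c by nra.
have : (16 * c * u) ^+ 2 <= ((b + c) * v) ^+ 2.
  by rewrite ler_sqr ?nnegrE //; nra.
move=> hsq.
have hp : 0 < (b + c) ^+ 2 by rewrite exprn_gt0.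
rewrite -(ler_pM2r hp).
have e1 : 15 * c * u ^+ 2 * (b + c) ^+ 2 <= b * (16 * c * u) ^+ 2.
  have : 0 <= c * u ^+ 2 by rewrite mulr_ge0 // ?exprn_ge0 ?ltW.
  move=> h0; have := ler_wpM2l h0 q.
  by move=> H; apply: le_trans (le_trans _ H) _; rewrite le_eqVlt; apply/orP; left; apply/eqP; ring.
apply: (le_trans e1).
have -> : b * v ^+ 2 * (b + c) ^+ 2 = b * ((b + c) * v) ^+ 2 by ring.
by apply: ler_wpM2l => //; apply: ltW.
Qed.

Lemma core (R : realType) (a M : nat -> R) (K : nat) :
  (2 <= K)%N -> (forall i, (i < K)%N -> 0 < a i) -> 0 < M 0%N ->
  (forall i, (i < K)%N -> M i <= M i.+1) ->
  (forall k, (k.+2 <= K)%N ->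
     4 * Num.sqrt (a k.+1 / (a k + a k.+1)) * M k <= M k.+2) ->
  M K ^+ 2 < 15 * M 0%N ^+ 2 ->
  15 ^+ K.-1 * a K.-1 < 15 ^+ 4 * a 0%N.
Proof.
move=> K2 apos M0 Minc Mlink MK.
have mono : forall i j, (i <= j <= K)%N -> M i <= M j.
  move=> i; elim=> [|j IH] /andP [hij hjK].
    by move: hij; rewrite leqn0 => /eqP ->.
  move: hij; rewrite leq_eqVlt => /orP [/eqP -> //|hij].
  apply: le_trans (Minc j hjK); apply: IH.
  by rewrite -ltnS hij /= ltnW.
have Mpos : forall i, (i <= K)%N -> 0 < M i.
  by move=> i hi; apply: lt_le_trans M0 (mono _ _ _); rewrite leq0n hi.
set U := fun i => M i ^+ 2.
have Umono : forall i j, (i <= j <= K)%N -> U i <= U j.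
  move=> i j /andP [hij hjK]; rewrite /U ler_sqr ?nnegrE; last 2 first.
  - by apply: ltW; apply: Mpos; apply: leq_trans hjK.
  - by apply: ltW; apply: Mpos.
  by apply: mono; rewrite hij hjK.
have Upos : forall i, (i <= K)%N -> 0 < U i.
  by move=> i hi; rewrite /U exprn_gt0 // Mpos.
have UK : U K < 15 * U 0%N by [].
have P : forall k, (k.+2 <= K)%N ->
    15 * a k.+1 * U k ^+ 2 <= a k * U k.+2 ^+ 2.
  move=> k hk.
  apply: step_ineq.
  - by apply: apos; apply: leq_ltn_trans hk; rewrite ltnW.
  - by apply: apos; apply: leq_trans hk.
  - by apply: Upos; apply: leq_trans hk; rewrite ltnW.
  - by apply: Umono; rewrite hk ltnW.
  - apply: le_lt_trans (Umono k.+2 K _) _; first by rewrite hk leqnn.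
    apply: lt_le_trans UK _; rewrite ler_pM2l // Umono //.
    by rewrite leq0n /= ltnW // ltnW.
  - have hx : 0 <= a k.+1 / (a k + a k.+1).
      have h1 := apos k.+1 (leq_trans (ltnSn _) hk).
      have h0 := apos k (leq_trans (ltnW (ltnSn _)) (leq_trans (ltnSn _) hk)).
      by rewrite divr_ge0 // ltW // addr_gt0.
    have L := Mlink k hk.
    have : (4 * Num.sqrt (a k.+1 / (a k + a k.+1)) * M k) ^+ 2 <= U k.+2.
      rewrite /U ler_sqr ?nnegrE //.
      + rewrite mulr_ge0 // ?mulr_ge0 // ?sqrtr_ge0 //.
        by apply: ltW; apply: Mpos; apply: leq_trans hk; rewrite ltnW.
      + by apply: ltW; apply: Mpos.
    by rewrite !exprMn sqr_sqrtr // /U; apply: le_trans; apply/eqW'; ring.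
have Ind : forall t, (t < K)%N ->
    15 ^+ t * a t * (U 0%N ^+ 2 * U 1%N ^+ 2) <= a 0%N * (U t ^+ 2 * U t.+1 ^+ 2).
  elim=> [|t IH] ht.
    by rewrite expr0 mul1r.
  have at0 : 0 < a t by apply: apos; apply: ltnW.
  have at1 := apos _ ht.
  have IH' := IH (ltnW ht).
  have Pt := P t ht.
  rewrite -(ler_pM2l at0).
  have e : a t * (15 ^+ t.+1 * a t.+1 * (U 0%N ^+ 2 * U 1%N ^+ 2)) =
     (15 * a t.+1) * (15 ^+ t * a t * (U 0%N ^+ 2 * U 1%N ^+ 2)) by rewrite exprS; ring.
  rewrite e.
  apply: le_trans (ler_wpM2l _ IH') _; first by rewrite mulr_ge0 // ltW.
  have e2 : 15 * a t.+1 * (a 0%N * (U t ^+ 2 * U t.+1 ^+ 2)) =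
      (a 0%N * U t.+1 ^+ 2) * (15 * a t.+1 * U t ^+ 2) by ring.
  rewrite e2.
  apply: le_trans (ler_wpM2l _ Pt) _.
    have a00 : 0 < a 0%N by apply: apos; apply: leq_ltn_trans ht.
    have U1 : 0 < U t.+1 by apply: Upos; apply: ltnW.
    by apply: mulr_ge0; apply: ltW => //; apply: exprn_gt0.
  by apply/eqW'; ring.
have hK0 : (0 < K)%N by apply: leq_trans K2.
have hK1 : (K.-1 < K)%N by rewrite prednK.
have I := Ind _ hK1; rewrite prednK // in I.
have a00 : 0 < a 0%N by apply: apos; apply: leq_ltn_trans hK1.
have U0p : 0 < U 0%N by apply: Upos.
have U1p : 0 < U 1%N by apply: Upos; apply: ltnW.
have Upp : 0 < U K.-1 by apply: Upos; apply: ltnW.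
have U01 : U 0%N <= U 1%N by apply: Umono; rewrite /= ltnW.
have Up : U K.-1 <= U K by apply: Umono; rewrite leqnn andbT leq_pred.
have h1 : U K.-1 * U K < (15 * U 1%N) * (15 * U 0%N).
  have UKp : 0 < U K by apply: Upos.
  have UKl : U K < 15 * U 0%N by [].
  have UKl' : U K < 15 * U 1%N by apply: lt_le_trans UKl _; rewrite ler_pM2l.
  apply: ltr_pM; [exact: ltW | exact: ltW | | exact: UKl].
  exact: le_lt_trans Up UKl'.
have h2 : (U K.-1 * U K) ^+ 2 < ((15 * U 1%N) * (15 * U 0%N)) ^+ 2.
  rewrite ltr_sqr // nnegrE; apply: ltW; first by apply: mulr_gt0 => //; apply: Upos.
  by apply: mulr_gt0; apply: mulr_gt0.
have h3 : a 0%N * (U K.-1 ^+ 2 * U K ^+ 2) < 15 ^+ 4 * a 0%N * (U 0%N ^+ 2 * U 1%N ^+ 2).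
  have -> : 15 ^+ 4 * a 0%N * (U 0%N ^+ 2 * U 1%N ^+ 2) = a 0%N * ((15 * U 1%N) * (15 * U 0%N)) ^+ 2 by ring.
  by rewrite -exprMn ltr_pM2l.
have h4 := le_lt_trans I h3.
have hp : 0 < U 0%N ^+ 2 * U 1%N ^+ 2 by rewrite mulr_gt0 // exprn_gt0.
by rewrite ltr_pM2r in h4.
Qed.
Lemma Ad_seq_le (R : realType) (n : nat) (f : 'rV[R]_n -> \bar R) A r k :
  (f (Ad_seq f A r k) <= f r)%E.
Proof.
elim: k => [|k IH] /=; first by [].
by case: ifP => [h|_] //; apply: le_trans h IH.
Qed.

Lemma fin_bounds {R : realType} (x y : \bar R) (a c : R) :
  (a%:E <= x)%E -> (x <= y)%E -> (y <= c%:E)%E ->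
  a <= fine x /\ fine x <= fine y.
Proof.
case: x => [x| |] //=; case: y => [y| |] //=; rewrite ?lee_fin.
all: try by move=> h1 h2 _; split.

Qed.

Lemma Astar_n_ge (R : realType) (n : nat) (f : 'rV[R]_n -> \bar R) z m j :
  (m j)%:R <= Astar_n f z m j.
Proof. by case: j => [|[|j]] //=; rewrite le_max lexx. Qed.

Lemma Astar_n_link (R : realType) (n : nat) (f : 'rV[R]_n -> \bar R) z m j :
  4 * Num.sqrt ((Fr f (z j.+1) - Fr f (z j.+2)) / (Fr f (z j) - Fr f (z j.+2)))
    * (m j.+1)%:R <= Astar_n f z m j.+2.
Proof. by rewrite /= le_max lexx orbT. Qed.


Theorem lemma1 (R : realType) (n : nat) (N : 'rV[R]_n -> R)
  (f : 'rV[R]_n -> \bar R) (fstar : R) (A : 'rV[R]_n -> nat -> 'rV[R]_n)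
  (rho : R) (z0 : 'rV[R]_n) (eps : R)
  (z : nat -> 'rV[R]_n) (m : nat -> nat) (jout : nat) :
  is_norm N ->
  proper_fun f -> closed_fun f -> convex_fun f ->
  (exists x, f x = fstar%:E) -> (forall x, (fstar%:E <= f x)%E) ->
  (forall x, A x 0%N = x) ->
  assumptionA N f fstar A ->
  0 < rho -> Vf f fstar rho z0 -> 0 < eps ->
  Astar_run f A z0 eps z m jout ->
  let D : int := Num.ceil (5 + ln (1 + (Fr f z0 - fstar) / eps) / ln 15) in
  D <= jout%:Z ->
  forall l : nat, l%:Z <= jout%:Z - D ->
    ((m l.+1)%:R : R) <= 1 / Num.sqrt (15 : R) * (m (l.+1 + `|D|%N)%N)%:R.
Proof.
move=> _ _ _ _ _ fge _ _ rho0 hz0V eps0 [hz0 [hm0 [hout [hdec hlast]]]] D hDj l hl.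
have zle : forall j, (j <= jout.+1)%N -> (f (z j) <= f z0)%E.
  elim=> [|j IH] hj; first by rewrite hz0.
  have [_ [_ [_ ->]]] := hout j hj.
  apply: (@le_trans _ _ (f (z j))); last exact: IH (ltnW hj).
  exact: Ad_seq_le.
have zb : forall j, (j <= jout.+1)%N -> fstar <= Fr f (z j) /\ Fr f (z j) <= Fr f z0.
  move=> j hj.
  have hV : (f z0 <= (fstar + rho)%:E)%E by exact: hz0V.
  exact: (@fin_bounds R _ _ _ _ (fge (z j)) (zle j hj) hV).
have [fz00 _] := zb 0%N isT; rewrite hz0 in fz00.
set F := (Fr f z0 - fstar) / eps.
have F0 : 0 <= F by rewrite /F divr_ge0 ?subr_ge0 // ltW.
have ln15 : 0 < ln (15 : R) by apply: ln_gt0; lra.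
have lnF : 0 <= ln (1 + F) by apply: ln_ge0; lra.
have hX : 5 + ln (1 + F) / ln 15 <= D%:~R by exact: ceil_ge.
have D5 : 5 <= D.
  have : (5 : R) <= D%:~R by apply: le_trans hX; rewrite lerDl divr_ge0 // ltW.
  by rewrite (_ : (5 : R) = (5 : int)%:~R) // ler_int.
have [K hK] : exists K : nat, D = K%:Z by exists `|D|%N; rewrite gez0_abs // (le_trans _ D5).
have absD : `|D|%N = K by rewrite hK.
rewrite absD.
rewrite hK in D5 hX hl.
have K5 : (5 <= K)%N by move: D5; rewrite lez_nat.
have hlK : (l + K <= jout)%N by move: hl; lia.
have pow : 1 + F <= 15 ^+ (K - 5).
  have h1 : ln (1 + F) <= ln 15 *+ (K - 5).
    have : ln (1 + F) / ln 15 <= (K - 5)%:R.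
      have hX' : 5 + ln (1 + F) / ln 15 <= K%:R := hX.
      rewrite natrB //; lra.
    rewrite ler_pdivrMr // => h; apply: (le_trans h); by rewrite -[ln 15 *+ _]mulr_natr mulrC.
  have h15 : (0:R) < 15 by lra.
  rewrite -(lnXn _ h15) in h1.
  by rewrite -ler_ln // posrE; [lra | apply: exprn_gt0; lra].
set a := fun i => Fr f (z (l + i)%N) - Fr f (z (l + i).+1).
set M := fun i => ((m (l.+1 + i)%N)%:R : R).
have M0e : M 0%N = (m l.+1)%:R by rewrite /M addn0.
have MKe : M K = (m (l.+1 + K)%N)%:R by [].
rewrite -M0e -MKe leNgt; apply/negP => Hlt.
have s15 : 0 < Num.sqrt (15 : R) by rewrite sqrtr_gt0 ltr0n.
have apos : forall i, (i < K)%N -> 0 < a i.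
  move=> i hi; have H : (l + i < jout)%N by apply: leq_trans hlK; rewrite ltn_add2l.
  exact: lt_trans eps0 (hdec _ H).
have M0 : 0 < M 0%N.
  have H : (l <= jout)%N by apply: leq_trans hlK; rewrite leq_addr.
  rewrite M0e ltr0n; have [h _] := hout l H; exact: h.
have Minc : forall i, (i < K)%N -> M i <= M i.+1.
  move=> i hi; rewrite /M addnS.
  have H : (l.+1 + i <= jout)%N by rewrite addSn -addnS; apply: leq_trans hlK; rewrite leq_add2l.
  have [_ [[h _] _]] := hout (l.+1 + i)%N H.
  exact: le_trans (@Astar_n_ge R n f z m _) h.
have Mlink : forall k, (k.+2 <= K)%N ->
    4 * Num.sqrt (a k.+1 / (a k + a k.+1)) * M k <= M k.+2.
  move=> k hk.
  have e : a k.+1 / (a k + a k.+1) =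
     (Fr f (z (l + k).+1) - Fr f (z (l + k).+2)) / (Fr f (z (l + k)%N) - Fr f (z (l + k).+2)).
    by rewrite /a addnS; congr (_ / _); ring.
  rewrite e /M addSn !addnS.
  have H : ((l + k).+2 <= jout)%N by rewrite -!addnS; apply: leq_trans hlK; rewrite leq_add2l.
  have [_ [[h _] _]] := hout (l + k).+2 H.
  exact: le_trans (@Astar_n_link R n f z m _) h.
have MK : M K ^+ 2 < 15 * M 0%N ^+ 2.
  have MKp : 0 <= M K by rewrite /M ler0n.
  have h1 : M K < Num.sqrt 15 * M 0%N.
    by move: Hlt; rewrite mul1r ltr_pdivrMl.
  have : M K ^+ 2 < (Num.sqrt 15 * M 0%N) ^+ 2.
    by rewrite ltr_sqr // nnegrE // mulr_ge0 // ltW.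
  by rewrite exprMn sqr_sqrtr ?ler0n.
have K2 : (2 <= K)%N by apply: leq_trans K5.
have C := @core R a M K K2 apos M0 Minc Mlink MK.
have aK : eps < a K.-1.
  have H : (l + K.-1 < jout)%N.
    apply: leq_trans hlK; rewrite -addnS prednK ?leq_addr //.
    by apply: leq_trans K2.
  exact: hdec _ H.
have a0 : a 0%N <= F * eps.
  rewrite /F divfK ?gt_eqF // /a addn0.
  have H1 : (l <= jout.+1)%N by apply: leq_trans (leq_trans (leq_addr K l) hlK) (leqnSn _).
  have H2 : (l.+1 <= jout.+1)%N by rewrite ltnS; apply: leq_trans hlK; rewrite leq_addr.
  have [_ h1] := zb _ H1; have [h2 _] := zb _ H2.
  by apply: lerB.
have eK : K.-1 = (4 + (K - 5))%N.
  by clear -K5; lia.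
rewrite eK exprD -mulrA ltr_pM2l ?exprn_gt0 // in C.
rewrite -eK in C.
set P := 15 ^+ (K - 5) in pow C.
have P0 : 0 < P by apply: lt_le_trans pow; apply: ltr_wpDr.
have h1 : P * eps < P * a K.-1 by rewrite ltr_pM2l.
have h2 : (1 + F) * eps <= P * eps by rewrite ler_pM2r.
have h3 : F * eps < (1 + F) * eps by rewrite ltr_pM2r // ltrDr.
have := lt_le_trans (lt_trans h1 C) a0.
move=> h4; have := lt_trans h4 h3; have := le_lt_trans h2 (lt_trans h4 h3).
by rewrite ltxx.
Qed.
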